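(* Let $X_1,X_0$ be real random variables with densities $f_1,f_0$, and let $p_1,p_0>0$. For $b>0$ and $s\in\mathbb{R}$ define \[ \mathcal{O}_b(s)=p_1\log\mathbb{E}\Big[\Big(\tfrac{e^{sX_1}}{e^{sX_1}+e^{-sX_1}}\Big)^{b}\Big]+p_0\log\mathbb{E}\Big[\Big(\tfrac{e^{-sX_0}}{e^{sX_0}+e^{-sX_0}}\Big)^{b}\Big]. \] Assume $f_1(x)\ge f_1(-x)$ and $f_0(x)\le f_0(-x)$ for all $x\ge 0$. Then for every $b\ge 1$ the function $s\mapsto\mathcal{O}_b(s)$ is nondecreasing on $[0,\infty)$; in particular $\sup_{s\ge0}\mathcal{O}_b(s)=\lim_{s\to\infty}\mathcal{O}_b(s)$, i.e.\ the weighted estimator $\hat s_w(b)=\operatorname{argmax}\mathcal{O}_b$ equals $\infty$.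
   Context: $\mathcal{O}_b$ is the large-sample limit of the DRFit objective (entropy-weighted loss with $\rho_k=1$, no ridge term, $b=1/\alpha$) for one-dimensional logistic regression $\mathbb{P}(y=1\mid x)=e^{sx}/(e^{sx}+e^{-sx})$ on labelled data, where $X_k$ is the covariate distribution given (possibly erroneous) label $k$ and $p_k$ the probability of label $k$. *)

(* Defs.v *)
From HB Require Import structures.
From mathcomp Require Import all_boot all_order all_algebra.
From mathcomp Require Import all_classical all_reals all_analysis.
Set Implicit Arguments. Unset Strict Implicit. Unset Printing Implicit Defensive.
Import Order.TTheory GRing.Theory Num.Theory.
Import numFieldNormedType.Exports.
Local Open Scope classical_set_scope.
Local Open Scope ring_scope.

Definition is_density {R : realType} (f : R -> R) : Prop :=
  measurable_fun setT f /\ (forall x, 0 <= f x) /\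
  (\int[lebesgue_measure]_x (f x)%:E = 1)%E.

Definition expect_dens {R : realType} (f : R -> R) (g : R -> R) : R :=
  Rintegral lebesgue_measure setT (fun x => g x * f x).

Definition pos_prob {R : realType} (s x : R) : R :=
  expR (s * x) / (expR (s * x) + expR (- (s * x))).
Definition neg_prob {R : realType} (s x : R) : R :=
  expR (- (s * x)) / (expR (s * x) + expR (- (s * x))).

Definition Obj {R : realType} (f1 f0 : R -> R) (p1 p0 b s : R) : R :=
  p1 * ln (expect_dens f1 (fun x => pos_prob s x `^ b))
  + p0 * ln (expect_dens f0 (fun x => neg_prob s x `^ b)).

(* Main.v *)
Require Import Defs.
From HB Require Import structures.
From mathcomp Require Import all_boot all_order all_algebra.
From mathcomp Require Import all_classical all_reals all_analysis.
Import Order.TTheory GRing.Theory Num.Theory.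
Import numFieldNormedType.Exports.
Local Open Scope classical_set_scope.
Local Open Scope ring_scope.
From mathcomp Require Import measurable_realfun.
From mathcomp.algebra_tactics Require Import ring lra.
Section S.
Local Open Scope convex_scope.
Context {R : realType}.
Definition P (u : R) := expR u / (expR u + expR (- u)).
Lemma den_gt0 (u : R) : 0 < expR u + expR (- u).
Proof. by rewrite addr_gt0 ?expR_gt0. Qed.
Lemma P_cont : continuous P.
Proof.
move=> u; apply: continuousM; first exact: continuous_expR.
apply: continuousV; first by rewrite gt_eqF // den_gt0.
apply: continuousD; first exact: continuous_expR.
apply: continuous_comp; last exact: continuous_expR.
exact: opp_continuous.
Qed.
Lemma PN (u : R) : P (- u) = 1 - P u.
Proof.
rewrite /P opprK addrC; have := den_gt0 u => h.
field; by rewrite gt_eqF.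
Qed.
Lemma PE (u : R) : P u = (1 + expR (- (u + u)))^-1.
Proof.
rewrite /P !expRN expRD; have := expR_gt0 u => h.
field; rewrite ?gt_eqF //.
Qed.
Lemma P_gt0 (u : R) : 0 < P u.
Proof. by rewrite /P divr_gt0 ?expR_gt0 ?den_gt0. Qed.
Lemma P_le1 (u : R) : P u <= 1.
Proof. by rewrite /P ler_pdivrMr ?den_gt0 // mul1r lerDl expR_ge0. Qed.
Lemma P_mono (u v : R) : u <= v -> P u <= P v.
Proof.
move=> uv; rewrite !PE lef_pV2 ?posrE ?addr_gt0 ?expR_gt0 //.
by rewrite lerD2l ler_expR lerN2 lerD.
Qed.
Lemma P0 : P 0 = 2^-1.
Proof. by rewrite /P oppr0 expR0 div1r. Qed.
Lemma P_ge_half (u : R) : 0 <= u -> 2^-1 <= P u.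
Proof. by move=> u0; rewrite -P0 P_mono. Qed.

Lemma conv_ineq (b a c p q : R) : 1 <= b -> 0 <= a -> a <= c -> c <= p -> p <= q ->
  c + p = a + q -> c `^ b + p `^ b <= a `^ b + q `^ b.
Proof.
move=> b1 a0 ac cp pq e.
have [aq|aq] := eqVneq a q.
  have ca : c = a by apply/eqP; rewrite eq_le ac /= aq (le_trans cp pq).
  have pa : p = a by apply/eqP; rewrite eq_le (le_trans ac cp) /= aq pq.
  by rewrite ca pa -aq.
have qa0 : 0 < q - a.
  by rewrite subr_gt0 lt_neqAle aq /= (le_trans ac (le_trans cp pq)).
pose l := (q - c) / (q - a).
have l0 : 0 <= l by apply: divr_ge0; [rewrite subr_ge0; exact: le_trans cp pq | exact: ltW].
have l1 : l <= 1.
  by rewrite ler_pdivrMr // mul1r lerD2l lerN2.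
pose t : {i01 R} := Itv01 l0 l1.
have q0 : 0 <= q by rewrite (le_trans a0) // (le_trans ac (le_trans cp pq)).
have inA : a \in (`[0, +oo[%classic : set R) by rewrite inE /= in_itv /= a0.
have inQ : q \in (`[0, +oo[%classic : set R) by rewrite inE /= in_itv /= q0.
have H1 := convex_powR b1 t inA inQ.
have H2 := convex_powR b1 t inQ inA.
have H1' : (l * a + (1 - l) * q) `^ b <= l * a `^ b + (1 - l) * q `^ b := H1.
have H2' : (l * q + (1 - l) * a) `^ b <= l * q `^ b + (1 - l) * a `^ b := H2.
have ec : l * a + (1 - l) * q = c.
  rewrite /l; field; by rewrite gt_eqF.
have ep : l * q + (1 - l) * a = p.
  have -> : p = a + q - c by rewrite -e addrC addKr.
  rewrite /l; field; by rewrite gt_eqF.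
rewrite ec in H1'; rewrite ep in H2'.
apply: le_trans (lerD H1' H2') _.
rewrite le_eqVlt; apply/orP; left; apply/eqP; ring.
Qed.

Lemma alg_aux (Pq Pp Qq Qp A B : R) : 0 <= (Pq - Pp) * (A - B) ->
  0 <= (Qq + Pq - (Qp + Pp)) * B -> Pp * A + Qp * B <= Pq * A + Qq * B.
Proof.
move=> h1 h2; rewrite -subr_ge0; apply: le_trans (addr_ge0 h1 h2) _.
rewrite le_eqVlt; apply/orP; left; apply/eqP; ring.
Qed.

Lemma pw (b u v A B : R) : 1 <= b -> 0 <= u -> u <= v -> 0 <= B -> B <= A ->
  P u `^ b * A + P (- u) `^ b * B <= P v `^ b * A + P (- v) `^ b * B.
Proof.
move=> b1 u0 uv B0 BA.
rewrite !PN.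
have p0 := @P_gt0 u; have q1 := @P_le1 v.
have puv : P u <= P v by apply: P_mono.
have ph := @P_ge_half u u0.
set p := P u in p0 ph puv *; set q := P v in q1 puv *.
have X : p `^ b <= q `^ b.
  apply: ge0_ler_powR => //; rewrite ?nnegrE.
  - exact: le_trans ler01 b1.
  - exact: ltW.
  - exact: le_trans (ltW p0) puv.
have h2 : (2^-1 : R) + 2^-1 = 1 by field.
have Z : (1 - p) `^ b + p `^ b <= (1 - q) `^ b + q `^ b.
  apply: conv_ineq => //.
  - by rewrite subr_ge0.
  - by rewrite lerD2l lerN2.
  - rewrite lerBlDr; apply: le_trans (lerD ph ph); by rewrite h2.
  - ring.
have XY : 0 <= (q `^ b - p `^ b) * (A - B) by apply: mulr_ge0; rewrite subr_ge0.
have ZB : 0 <= ((1 - q) `^ b + q `^ b - ((1 - p) `^ b + p `^ b)) * B.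
  by apply: mulr_ge0; rewrite ?subr_ge0.
exact: alg_aux XY ZB.
Qed.
End S.
Section T.
Context {R : realType}.
Local Notation mu := (@lebesgue_measure R).

Lemma refl_int (g : R -> R) : measurable_fun setT g -> (forall x, 0 <= g x) ->
  (\int[mu]_x (g x)%:E = \int[mu]_x (g (- x))%:E)%E.
Proof.
move=> mg g0.
transitivity (\int[pushforward mu (-%R : R -> measurableTypeR R)]_x (g x)%:E)%E.
  by apply: eq_measure_integral => /= A mA _; exact/esym/lebesgue_measureN.
rewrite ge0_integral_pushforward //=.
- exact/measurable_EFinP.
- by move=> x _; rewrite lee_fin.
Qed.


Lemma mfun_hf {f h : R -> R} : measurable_fun setT f -> measurable_fun setT h ->
  measurable_fun [set: R] (EFin \o (fun x => h x * f x)).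
Proof. by move=> mf mh; apply/measurable_EFinP; exact: measurable_funM. Qed.

Lemma mfun_hfN {f h : R -> R} : measurable_fun setT f -> measurable_fun setT h ->
  measurable_fun [set: R] (EFin \o (fun x => h (- x) * f (- x))).
Proof.
move=> mf mh; apply/measurable_EFinP; apply: measurable_funM.
- by have := measurableT_comp mh (@oppr_measurable R setT); apply.
- by have := measurableT_comp mf (@oppr_measurable R setT); apply.
Qed.

Lemma I_fin (f h : R -> R) : is_density f -> (forall x, 0 <= h x <= 1) ->
  measurable_fun setT h ->
  (\int[mu]_x ((h x * f x)%:E) = (expect_dens f h)%:E)%E /\
  0 <= expect_dens f h <= 1.
Proof.
move=> [mf [f0 f1]] h01 mh.
have I0 : (0 <= \int[mu]_x ((h x * f x)%:E))%E.
  apply: integral_ge0 => x _; rewrite lee_fin mulr_ge0 //; by case/andP: (h01 x).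
have I1 : (\int[mu]_x ((h x * f x)%:E) <= 1)%E.
  rewrite -f1; apply: ge0_le_integral => //.
  - move=> x _; rewrite lee_fin mulr_ge0 //; by case/andP: (h01 x).
  - exact: (mfun_hf mf mh).
  - exact/measurable_EFinP.
  - move=> x _; rewrite lee_fin ler_piMl //; by case/andP: (h01 x).
have fin : (\int[mu]_x ((h x * f x)%:E))%E \is a fin_num.
  by rewrite ge0_fin_numE // (le_lt_trans I1) // ltry.
have E : (\int[mu]_x ((h x * f x)%:E) = (expect_dens f h)%:E)%E.
  by rewrite /expect_dens /Rintegral fineK.
split => //; move: I0 I1; rewrite E lee_fin => -> /=; by rewrite lee_fin.
Qed.

Lemma key (f h : R -> R) : is_density f -> (forall x, 0 <= h x <= 1) ->
  measurable_fun setT h ->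
  (\int[mu]_x ((h x * f x + h (- x) * f (- x))%:E) =
    (expect_dens f h)%:E + (expect_dens f h)%:E)%E.
Proof.
move=> df h01 mh; have [E _] := @I_fin f h df h01 mh.
case: df => [mf [f0 _]].
have g0 : forall x, 0 <= h x * f x by move=> x; rewrite mulr_ge0 //; case/andP: (h01 x).
have mg : measurable_fun setT (fun x => h x * f x) by exact: measurable_funM.
have Rf := @refl_int _ mg g0; rewrite /= in Rf.
under eq_integral do rewrite EFinD.
rewrite ge0_integralD //.
- by rewrite -Rf E.
- by move=> x _; rewrite lee_fin.
- exact: (mfun_hf mf mh).
- by move=> x _; rewrite lee_fin.
- exact: (mfun_hfN mf mh).
Qed.

Lemma E_mono (f hs ht : R -> R) : is_density f -> (forall x, 0 <= hs x <= 1) ->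
  (forall x, 0 <= ht x <= 1) -> measurable_fun setT hs -> measurable_fun setT ht ->
  (forall x, hs x * f x + hs (- x) * f (- x) <= ht x * f x + ht (- x) * f (- x)) ->
  expect_dens f hs <= expect_dens f ht.
Proof.
move=> df hs01 ht01 mhs mht H.
have := @key f hs df hs01 mhs; have := @key f ht df ht01 mht.
case: (df) => [mf [f0 _]].
have g0 : forall h, (forall x, 0 <= h x <= 1) -> forall x, 0 <= h x * f x + h (- x) * f (- x).
  move=> h h01 x; move: (h01 x) (h01 (- x)) => /andP[a _] /andP[c _].
  by rewrite addr_ge0 // mulr_ge0.
move=> Kt Ks.
have : (\int[mu]_x ((hs x * f x + hs (- x) * f (- x))%:E) <=
        \int[mu]_x ((ht x * f x + ht (- x) * f (- x))%:E))%E.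
  apply: ge0_le_integral => //.
  - by move=> x _; rewrite lee_fin g0.
  - apply/measurable_EFinP; apply: measurable_funD.
    + by apply/measurable_EFinP; exact: (mfun_hf mf mhs).
    + by apply/measurable_EFinP; exact: (mfun_hfN mf mhs).
  - apply/measurable_EFinP; apply: measurable_funD.
    + by apply/measurable_EFinP; exact: (mfun_hf mf mht).
    + by apply/measurable_EFinP; exact: (mfun_hfN mf mht).
  - by move=> x _; rewrite lee_fin.
rewrite Ks Kt -!EFinD lee_fin => h; lra.
Qed.

Lemma E_const (f h : R -> R) (c : R) : is_density f -> 0 <= c -> (forall x, h x = c) ->
  expect_dens f h = c.
Proof.
move=> [mf [f0 f1]] c0 hc.
rewrite /expect_dens /Rintegral.
under eq_integral do rewrite hc EFinM.
by rewrite ge0_integralZl //= ?f1 ?mule1 // => [|x _]; [exact/measurable_EFinP | rewrite lee_fin].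
Qed.
End T.

Section M.
Context {R : realType}.

Lemma mP (b s : R) : measurable_fun setT (fun x : R => P (s * x) `^ b).
Proof.
apply: (measurableT_comp (f := (@powR R)^~ b)); first exact: measurable_powR.
apply: (measurableT_comp (f := P)); first exact: continuous_measurable_fun P_cont.
by apply: measurable_funM.
Qed.

Lemma mN (b s : R) : measurable_fun setT (fun x : R => neg_prob s x `^ b).
Proof.
apply: (eq_measurable_fun (fun x => P ((- s) * x) `^ b)); last exact: mP.
by move=> x _; rewrite /neg_prob /P mulNr opprK addrC.
Qed.

Lemma P01 (b u : R) : 1 <= b -> 0 <= P u `^ b <= 1.
Proof.
move=> b1; rewrite powR_ge0 /=.
apply: le_trans (ge1r_powR _ b1) (P_le1 u).
by rewrite P_gt0 P_le1.
Qed.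

Lemma sym_ext (F G : R -> R) : (forall x, F (- x) = F x) -> (forall x, G (- x) = G x) ->
  (forall x, 0 <= x -> F x <= G x) -> forall x, F x <= G x.
Proof.
move=> FN GN H x; case: (leP 0 x) => [|x0]; first exact: H.
rewrite -FN -GN; apply: H; lra.
Qed.

End M.

Theorem proposition3 (R : realType) (f1 f0 : R -> R) (p1 p0 : R) :
  is_density f1 -> is_density f0 -> 0 < p1 -> 0 < p0 ->
  (forall x, 0 <= x -> f1 (- x) <= f1 x) ->
  (forall x, 0 <= x -> f0 x <= f0 (- x)) ->
  forall b : R, 1 <= b ->
    {in `[0, +oo[ &, forall s t, s <= t -> Obj f1 f0 p1 p0 b s <= Obj f1 f0 p1 p0 b t} /\
    Obj f1 f0 p1 p0 b s @[s --> +oo] --> sup [set Obj f1 f0 p1 p0 b s | s in `[0, +oo[].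
Proof.
move=> d1 d0 p1g p0g H1 H0 b b1.
have posE : forall s x : R, pos_prob s x = P (s * x) by [].
have negE : forall s x : R, neg_prob s x = P ((- s) * x).
  by move=> s x; rewrite /neg_prob /P mulNr opprK addrC.
have E1mono : forall s t : R, 0 <= s -> s <= t ->
    expect_dens f1 (fun x => pos_prob s x `^ b) <= expect_dens f1 (fun x => pos_prob t x `^ b).
  move=> s t s0 st.
  apply: (@E_mono R f1 (fun x => pos_prob s x `^ b) (fun x => pos_prob t x `^ b) d1).
  - by move=> x; rewrite posE P01.
  - by move=> x; rewrite posE P01.
  - exact: mP.
  - exact: mP.
  apply: sym_ext.
  - by move=> x; rewrite opprK addrC.
  - by move=> x; rewrite opprK addrC.
  move=> x x0; rewrite !posE !mulrN.
  have [f0' _] := d1; have [_ [f1ge0 _]] := d1.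
  apply: pw => //; first exact: mulr_ge0.
  - exact: ler_wpM2r.
  - exact: H1.
have E0mono : forall s t : R, 0 <= s -> s <= t ->
    expect_dens f0 (fun x => neg_prob s x `^ b) <= expect_dens f0 (fun x => neg_prob t x `^ b).
  move=> s t s0 st.
  apply: (@E_mono R f0 (fun x => neg_prob s x `^ b) (fun x => neg_prob t x `^ b) d0).
  - by move=> x; rewrite negE P01.
  - by move=> x; rewrite negE P01.
  - exact: mN.
  - exact: mN.
  apply: sym_ext.
  - by move=> x; rewrite opprK addrC.
  - by move=> x; rewrite opprK addrC.
  move=> x x0; rewrite !negE !mulNr !mulrN !opprK.
  have [_ [f0ge0 _]] := d0.
  rewrite [X in X <= _]addrC [X in _ <= X]addrC.
  apply: pw => //; first exact: mulr_ge0.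
  - exact: ler_wpM2r.
  - exact: H0.
pose c := (2^-1 : R) `^ b.
have c0 : 0 < c by rewrite powR_gt0.
have E1c : expect_dens f1 (fun x => pos_prob 0 x `^ b) = c.
  apply: (@E_const R f1 _ c d1); [exact: ltW | by move=> x; rewrite posE mul0r P0].
have E0c : expect_dens f0 (fun x => neg_prob 0 x `^ b) = c.
  apply: (@E_const R f0 _ c d0); [exact: ltW | by move=> x; rewrite negE oppr0 mul0r P0].
have E1pos : forall s : R, 0 <= s -> 0 < expect_dens f1 (fun x => pos_prob s x `^ b).
  by move=> s s0; rewrite (lt_le_trans c0) // -E1c E1mono.
have E0pos : forall s : R, 0 <= s -> 0 < expect_dens f0 (fun x => neg_prob s x `^ b).
  by move=> s s0; rewrite (lt_le_trans c0) // -E0c E0mono.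
have E1le : forall s : R, expect_dens f1 (fun x => pos_prob s x `^ b) <= 1.
  move=> s; have h01 : forall x, 0 <= pos_prob s x `^ b <= 1 by move=> x; rewrite posE P01.
  by case: (@I_fin R f1 (fun x => pos_prob s x `^ b) d1 h01 (mP b s)) => _ /andP[].
have E0le : forall s : R, expect_dens f0 (fun x => neg_prob s x `^ b) <= 1.
  move=> s; have h01 : forall x, 0 <= neg_prob s x `^ b <= 1 by move=> x; rewrite negE P01.
  by case: (@I_fin R f0 (fun x => neg_prob s x `^ b) d0 h01 (mN b s)) => _ /andP[].
have Omono : forall s t : R, 0 <= s -> s <= t -> Obj f1 f0 p1 p0 b s <= Obj f1 f0 p1 p0 b t.
  move=> s t s0 st; have t0 := le_trans s0 st; rewrite /Obj; apply: lerD.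
  - apply: ler_wpM2l; first exact: ltW p1g.
    rewrite ler_ln; first exact: E1mono.
    + by rewrite posrE; apply: E1pos.
    + by rewrite posrE; apply: E1pos.
  - apply: ler_wpM2l; first exact: ltW p0g.
    rewrite ler_ln; first exact: E0mono.
    + by rewrite posrE; apply: E0pos.
    + by rewrite posrE; apply: E0pos.
have Ole0 : forall s : R, Obj f1 f0 p1 p0 b s <= 0.
  move=> s; rewrite /Obj -[0]addr0; apply: lerD; apply: mulr_ge0_le0; rewrite ?ln_le0 //; exact: ltW.
split.
  move=> s t; rewrite !in_itv /= !andbT => s0 t0; exact: Omono.
set S := [set Obj f1 f0 p1 p0 b s | s in `[0, +oo[].
have hs : has_sup S.
  split.
    exists (Obj f1 f0 p1 p0 b 0), 0 => //.
    by rewrite /= in_itv /= lexx.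
  by exists 0 => y [s _ <-]; exact: Ole0.
apply/cvgrPdist_le => e e0.
have [y [s0 s0in <-] Hy] := sup_adherent e0 hs.
have s00 : 0 <= s0 by move: s0in; rewrite /= in_itv /= andbT.
near=> s.
have ss0 : s0 <= s by near: s; apply: nbhs_pinfty_ge; exact: num_real.
have up : Obj f1 f0 p1 p0 b s <= sup S.
  apply: sup_upper_bound => //; exists s => //.
  by rewrite /= in_itv /= andbT (le_trans s00 ss0).
have := Omono s0 s s00 ss0.
move=> H; rewrite ger0_norm; last by rewrite subr_ge0.
rewrite lerBlDl; apply: ltW; rewrite -ltrBlDr; exact: lt_le_trans Hy H.
Unshelve. all: end_near.
Qed.
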